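(* If $Q\in\mathcal{P}$ has full range, i.e. $\{Q(A):A\in\mathcal{F}\}=[0,1]$, then $D^*(v,Q)=L(v)$ for all $0<v<2$.
   Context: Let $(\Omega,\mathcal{F},\mu)$ be a finite or $\sigma$-finite measure space, and let $\mathcal{P}$ be the set of probability measures on $(\Omega,\mathcal{F})$ absolutely continuous with respect to $\mu$. For $P,Q\in\mathcal{P}$ the lower-case letters $p,q$ denote their densities with respect to $\mu$. The Kullback–Leibler divergence is $D(P\Vert Q)=\int\ln\frac{dP}{dQ}\,dP$ if $P\ll Q$, and $+\infty$ otherwise. The total variation distance is $V(P,Q)=\int_\Omega|p-q|\,d\mu$. For $v>0$ define $D^*(v,Q)=\inf\{D(P\Vert Q):P\in\mathcal{P},\ V(P,Q)\ge v\}$, with $\inf\emptyset=+\infty$. Vajda's function is $L(v)=\inf\{D(P\Vert Q):V(P,Q)=v\}$, where the infimum is over all pairs of probability measures $P,Q$ on a common measurable space. *)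

(* Defs.v *)
From HB Require Import structures.
From mathcomp Require Import all_boot all_order all_algebra.
From mathcomp Require Import all_classical all_reals all_analysis.
Set Implicit Arguments. Unset Strict Implicit. Unset Printing Implicit Defensive.
Import Order.TTheory GRing.Theory Num.Theory.
Local Open Scope classical_set_scope.
Local Open Scope ring_scope.
Local Open Scope ereal_scope.

Section defs.
Context {R : realType} {d : measure_display} {T : measurableType d}.

(* p is the density (w.r.t. mu) of a probability measure absolutely
   continuous w.r.t. mu: P(A) = \int_A p dmu. *)
Definition is_density (mu : {measure set T -> \bar R}) (p : T -> R) : Prop :=
  measurable_fun setT p /\ (forall x, (0 <= p x)%R) /\
  \int[mu]_x (p x)%:E = 1.

Definition dprob (mu : {measure set T -> \bar R}) (p : T -> R) (A : set T) :=
  \int[mu]_(x in A) (p x)%:E.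

Definition abs_cont (mu : {measure set T -> \bar R}) (p q : T -> R) : Prop :=
  forall A, measurable A -> dprob mu q A = 0 -> dprob mu p A = 0.

Definition KL (mu : {measure set T -> \bar R}) (p q : T -> R) : \bar R :=
  if `[< abs_cont mu p q >] then \int[mu]_x (p x * ln (p x / q x))%:E
  else +oo.

Definition TV (mu : {measure set T -> \bar R}) (p q : T -> R) : \bar R :=
  \int[mu]_x (`|p x - q x|)%:E.

Definition Dstar (mu : {measure set T -> \bar R}) (q : T -> R) (v : R) : \bar R :=
  ereal_inf [set KL mu p q | p in [set p | is_density mu p /\ v%:E <= TV mu p q]].

Definition full_range (mu : {measure set T -> \bar R}) (q : T -> R) : Prop :=
  [set dprob mu q A | A in measurable] = [set r%:E | r in [set r : R | (0 <= r <= 1)%R]].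

End defs.

(* Vajda's function: L(v) = inf { D(P||Q) : V(P,Q) = v }, over all pairs of
   probability measures P, Q on a common measurable space; each such pair is
   represented by densities w.r.t. a common (sigma-finite) dominating measure. *)
Definition vajdaL {R : realType} (v : R) : \bar R :=
  ereal_inf [set x : \bar R | exists (d : measure_display) (T : measurableType d)
     (mu : {measure set T -> \bar R}) (p q : T -> R),
     [/\ sigma_finite setT mu, is_density mu p, is_density mu q,
         TV mu p q = v%:E & KL mu p q = x]].

(* Main.v *)
Require Import Defs.
From HB Require Import structures.
From mathcomp Require Import all_boot all_order all_algebra.
From mathcomp Require Import all_classical all_reals all_analysis.
From mathcomp Require Import measurable_realfun.
From mathcomp.algebra_tactics Require Import ring lra.
Import Order.TTheory GRing.Theory Num.Theory.
Local Open Scope classical_set_scope.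
Local Open Scope ring_scope.
Local Open Scope ereal_scope.

Section reals.
Context {R : realType}.
Local Open Scope ring_scope.

Lemma ln_ge1 (z : R) : 0 < z -> 1 - z^-1 <= ln z.
Proof.
move=> z0.
have h := @le_ln1Dx R (z^-1 - 1).
have h1 : -1 < z^-1 - 1 by rewrite ltrBrDr addrC subrr invr_gt0.
move: (h h1); rewrite addrC subrK lnV ?posrE // => h2.
lra.
Qed.

Lemma tang (x y t : R) : 0 <= x -> 0 < y -> 0 < t ->
  x * (ln t + 1) - t * y <= x * ln (x / y).
Proof.
move=> x0 y0 t0.
have [->|xn0] := eqVneq x 0.
  by rewrite mul0r mul0r sub0r oppr_le0 mulr_ge0// ltW.
have xp : 0 < x by rewrite lt_neqAle eq_sym xn0.
pose z := x / (t * y).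
have zp : 0 < z by rewrite divr_gt0// mulr_gt0.
have ez : x / y = t * z by rewrite /z; field; rewrite ?gt_eqF.
have hz : z^-1 * x = t * y by rewrite /z invf_div; field; rewrite gt_eqF.
rewrite ez lnM ?posrE //.
have h := @ln_ge1 z zp.
have h2 : x * (1 - z^-1) <= x * ln z by rewrite ler_wpM2l// ltW.
move: h2; rewrite mulrBr mulr1 (mulrC x) hz => h2.
lra.
Qed.

End reals.
Section gen.
Context {R : realType} {d : measure_display} {T : measurableType d}
  (mu : {measure set T -> \bar R}).

Lemma mono_int (D : set T) (f g : T -> \bar R) : measurable D ->
  measurable_fun D f -> measurable_fun D g ->
  (forall x, D x -> f x <= g x) ->
  \int[mu]_(x in D) f x <= \int[mu]_(x in D) g x.
Proof.
move=> mD mf mg fg; rewrite integralE [leRHS]integralE leeB//.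
- apply: ge0_le_integral => //.
  + exact: measurable_funepos.
  + exact: measurable_funepos.
  + by move=> x Dx; apply: (@funepos_le _ _ D) => // [y /set_mem/fg|]; [|exact/mem_set].
- apply: ge0_le_integral => //.
  + exact: measurable_funeneg.
  + exact: measurable_funeneg.
  + by move=> x Dx; apply: (@funeneg_le _ _ D) => // [y /set_mem/fg|]; [|exact/mem_set].
Qed.

Lemma dens_int (p : T -> R) : is_density mu p -> mu.-integrable setT (EFin \o p).
Proof.
move=> [mp [p0 p1]]; apply/integrableP; split.
  exact/measurable_EFinP.
under eq_integral do rewrite /= ger0_norm//.
by rewrite p1 ltry.
Qed.

Lemma dens_intS (p : T -> R) (A : set T) : is_density mu p -> measurable A ->
  mu.-integrable A (EFin \o p).
Proof.
move=> hp mA; have := @dens_int p hp; apply: integrableS => //.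
Qed.

End gen.

Section core.
Context {R : realType} {d : measure_display} {T : measurableType d}
  (mu : {measure set T -> \bar R}).

Lemma mset (b : T -> bool) : measurable_fun setT b -> measurable [set x | b x].
Proof.
move=> mb; have := mb measurableT [set true] I.
by rewrite setTI.
Qed.

Lemma mfinv (g : T -> R) : measurable_fun setT g -> (forall x, (0 <= g x)%R) ->
  measurable_fun setT (fun x => (g x)^-1%R).
Proof.
move=> mg g0.
have -> : (fun x => (g x)^-1%R) =
    (fun x => if g x == 0%R then 0%R else expR (- ln (g x))).
  apply/funext => x; case: eqP => [->|h]; first by rewrite invr0.
  have gp : (0 < g x)%R by rewrite lt_neqAle eq_sym g0 andbT; apply/eqP.
  by rewrite -lnV ?posrE // lnK // posrE invr_gt0.
apply: measurable_fun_ifT.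
- exact: measurable_fun_eqr.
- exact: measurable_cst.
- apply: measurableT_comp; first exact: measurable_expR.
  by apply: measurableT_comp => //; apply: measurableT_comp => //;
    exact: measurable_ln.
Qed.

Lemma mKL (p q : T -> R) : measurable_fun setT p -> measurable_fun setT q ->
  (forall x, (0 <= q x)%R) ->
  measurable_fun setT (fun x => (p x * ln (p x / q x))%R).
Proof.
move=> mp mq q0; apply: measurable_funM => //.
apply: measurableT_comp; first exact: measurable_ln.
by apply: measurable_funM => //; exact: mfinv.
Qed.

Lemma dprob_ge0 (p : T -> R) A : (forall x, (0 <= p x)%R) -> 0 <= dprob mu p A.
Proof. by move=> p0; apply: integral_ge0 => x _; rewrite lee_fin. Qed.

Lemma dprob_le1 (p : T -> R) A : is_density mu p -> measurable A -> dprob mu p A <= 1.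
Proof.
move=> [mp [p0 p1]] mA; rewrite -p1; apply: ge0_subset_integral => //.
- exact/measurable_EFinP.
- by move=> x _; rewrite lee_fin.
Qed.

Lemma dprobE (p : T -> R) A : is_density mu p -> measurable A ->
  dprob mu p A = (fine (dprob mu p A))%:E.
Proof.
move=> hp mA; have [_ [p0 _]] := hp.
rewrite fineK // ge0_fin_numE ?dprob_ge0 //.
have h1 := @dprob_le1 p A hp mA.
by apply: (le_lt_trans h1); rewrite ltry.
Qed.

Lemma dprobU (p : T -> R) A B : is_density mu p -> measurable A -> measurable B ->
  [disjoint A & B] -> dprob mu p (A `|` B) = dprob mu p A + dprob mu p B.
Proof.
move=> [mp [p0 p1]] mA mB dAB; rewrite /dprob ge0_integral_setU //.
- apply: (measurable_funS measurableT) => //.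
  exact/measurable_EFinP.
- by move=> x _; rewrite lee_fin.
Qed.

Lemma int_lin (p q : T -> R) A (c t : R) : is_density mu p -> is_density mu q ->
  measurable A ->
  \int[mu]_(x in A) ((c * p x - t * q x)%R)%:E =
  (c * fine (dprob mu p A) - t * fine (dprob mu q A))%:E.
Proof.
move=> hp hq mA.
have ip := @dens_intS _ _ _ mu p A hp mA; have iq := @dens_intS _ _ _ mu q A hq mA.
have icp : mu.-integrable A (EFin \o (fun x => c * p x)%R).
  have h := integrableZl mA c ip.
  by apply: eq_integrable h => // x _ /=; rewrite EFinM.
have itq : mu.-integrable A (EFin \o (fun x => t * q x)%R).
  have h := integrableZl mA t iq.
  by apply: eq_integrable h => // x _ /=; rewrite EFinM.
under eq_integral do rewrite EFinB.
rewrite integralB_EFin //.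
under eq_integral do rewrite EFinM.
rewrite integralZl //.
under [X in _ - X = _]eq_integral do rewrite EFinM.
rewrite integralZl //.
rewrite EFinB !EFinM -(@dprobE p A hp mA) -(@dprobE q A hq mA).
done.
Qed.

End core.

Section core2.
Context {R : realType} {d : measure_display} {T : measurableType d}
  (mu : {measure set T -> \bar R}).

Lemma core (p q : T -> R) : is_density mu p -> is_density mu q -> abs_cont mu p q ->
  exists a b : R, [/\ (0 <= b <= a)%R, (a <= 1)%R, (b = 0 -> a = 0)%R,
    TV mu p q = (2 * (a - b))%:E &
    forall t1 t2 : R, (0 < t1)%R -> (0 < t2)%R ->
      ((a * (ln t1 + 1) - t1 * b) + ((1 - a) * (ln t2 + 1) - t2 * (1 - b)))%:E
        <= \int[mu]_x (p x * ln (p x / q x))%:E].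
Proof.
move=> hp hq ac.
have [mp [p0 p1]] := hp; have [mq [q0 q1]] := hq.
pose Z0 := [set x | q x == 0%R].
pose A := [set x | (q x != 0%R) && (q x < p x)%R].
pose B := [set x | (q x != 0%R) && (p x <= q x)%R].
have mZ0 : measurable Z0 by apply: mset; exact: measurable_fun_eqr.
have mA : measurable A.
  apply: mset; apply: measurable_and; first exact/measurable_neg/measurable_fun_eqr.
  exact: measurable_fun_ltr.
have mB : measurable B.
  apply: mset; apply: measurable_and; first exact/measurable_neg/measurable_fun_eqr.
  exact: measurable_fun_ler.
have dAB : [disjoint A & B].
  apply/disj_set2P/seteqP; split => // x [/andP[_ h1] /andP[_ h2]].
  by move: h1; rewrite ltNge h2.
have dABZ : [disjoint A `|` B & Z0].
  apply/disj_set2P/seteqP; split => // x [[/andP[h _]|/andP[h _]] hz];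
    by rewrite /Z0 /= in hz; rewrite hz in h.
have eT : [set: T] = (A `|` B) `|` Z0.
  apply/seteqP; split => // x _.
  rewrite /A /B /Z0 /=; have [hq0|hq0] := eqVneq (q x) 0%R; [by right|left].
  by have [h|h] := ltP (q x) (p x); [left|right]; apply/andP.
have mAB : measurable (A `|` B) by exact: measurableU.
have P1 : dprob mu p setT = 1 := p1.
have Q1 : dprob mu q setT = 1 := q1.
have QZ0 : dprob mu q Z0 = 0.
  by apply: integral0_eq => x /= /eqP ->.
have PZ0 : dprob mu p Z0 = 0 by exact: ac.
rewrite eT !dprobU // in P1 Q1.
rewrite (@dprobE _ _ _ mu _ _ hp mA) (@dprobE _ _ _ mu _ _ hp mB) (@dprobE _ _ _ mu _ _ hp mZ0) -!EFinD in P1.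
rewrite (@dprobE _ _ _ mu _ _ hq mA) (@dprobE _ _ _ mu _ _ hq mB) (@dprobE _ _ _ mu _ _ hq mZ0) -!EFinD in Q1.
rewrite (@dprobE _ _ _ mu _ _ hp mZ0) in PZ0; rewrite (@dprobE _ _ _ mu _ _ hq mZ0) in QZ0.
case: P1 => P1; case: Q1 => Q1; case: PZ0 => PZ0; case: QZ0 => QZ0.
set a := fine (dprob mu p A) in P1 *.
set b := fine (dprob mu q A) in Q1 *.
set pb := fine (dprob mu p B) in P1 *.
set qb := fine (dprob mu q B) in Q1 *.
set pz := fine (dprob mu p Z0) in P1 PZ0 *.
set qz := fine (dprob mu q Z0) in Q1 QZ0 *.
have ha : (0 <= a)%R by rewrite -lee_fin /a -dprobE //; exact: dprob_ge0.
have hb : (0 <= b)%R by rewrite -lee_fin /b -dprobE //; exact: dprob_ge0.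
have hpb : (0 <= pb)%R by rewrite -lee_fin /pb -dprobE //; exact: dprob_ge0.
have hqb : (0 <= qb)%R by rewrite -lee_fin /qb -dprobE //; exact: dprob_ge0.
have mabs : measurable_fun setT (fun x => (`|p x - q x|)%:E).
  apply/measurable_EFinP; apply: measurableT_comp => //.
  exact: measurable_funB.
have TA : \int[mu]_(x in A) (`|p x - q x|)%:E = (1 * a - 1 * b)%:E.
  rewrite -int_lin //; apply: eq_integral => x /set_mem /andP[_ h].
  by rewrite !mul1r ger0_norm // subr_ge0 ltW.
have TB : \int[mu]_(x in B) (`|p x - q x|)%:E = (-1 * pb - -1 * qb)%:E.
  rewrite -int_lin //; apply: eq_integral => x /set_mem /andP[_ h].
  by rewrite !mulN1r opprK ler0_norm ?subr_le0 // opprB addrC.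
have TZ : \int[mu]_(x in Z0) (`|p x - q x|)%:E = (1 * pz - 0 * qz)%:E.
  rewrite -int_lin //; apply: eq_integral => x /set_mem /eqP h.
  by rewrite h subr0 mul1r mul0r subr0 ger0_norm.
exists a, b; split.
- rewrite hb /=.
  suff : (0 <= 1 * a - 1 * b)%R by rewrite !mul1r subr_ge0.
  by rewrite -lee_fin -TA; apply: integral_ge0 => x _; rewrite lee_fin.
- lra.
- move=> b0; have : dprob mu q A = 0 by rewrite (@dprobE _ _ _ mu _ _ hq mA) -/b b0.
  by move/(ac A mA); rewrite (@dprobE _ _ _ mu _ _ hp mA) -/a => -[].
- rewrite /TV eT ge0_integral_setU //; try by apply: (measurable_funS measurableT).
  rewrite ge0_integral_setU //; try by apply: (measurable_funS measurableT).
  rewrite TA TB TZ -!EFinD; congr EFin; lra.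
- move=> t1 t2 t1p t2p.
  have mf := @mKL _ _ _ p q mp mq q0.
  have mfE : measurable_fun setT (EFin \o (fun x => p x * ln (p x / q x))%R).
    exact/measurable_EFinP.
  rewrite eT integral_setU //; last by apply: (measurable_funS measurableT).
  rewrite integral_setU //; last by apply: (measurable_funS measurableT).
  have IZ : \int[mu]_(x in Z0) (p x * ln (p x / q x))%:E = 0.
    apply: integral0_eq => x /= /eqP ->.
    by rewrite invr0 mulr0 ln0 // mulr0.
  have IA : ((ln t1 + 1) * a - t1 * b)%:E <= \int[mu]_(x in A) (p x * ln (p x / q x))%:E.
    rewrite -int_lin //; apply: mono_int => //.
    + apply: (measurable_funS measurableT) => //.
      apply/measurable_EFinP; apply: measurable_funB.
        exact: measurable_funM (measurable_cst _) mp.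
      exact: measurable_funM (measurable_cst _) mq.
    + by apply: (measurable_funS measurableT).
    + move=> x /andP[hq0 h]; rewrite lee_fin (mulrC (ln t1 + 1)%R).
      apply: tang => //; rewrite lt_neqAle eq_sym hq0 /=; exact: q0.
  have IB : ((ln t2 + 1) * pb - t2 * qb)%:E <= \int[mu]_(x in B) (p x * ln (p x / q x))%:E.
    rewrite -int_lin //; apply: mono_int => //.
    + apply: (measurable_funS measurableT) => //.
      apply/measurable_EFinP; apply: measurable_funB.
        exact: measurable_funM (measurable_cst _) mp.
      exact: measurable_funM (measurable_cst _) mq.
    + by apply: (measurable_funS measurableT).
    + move=> x /andP[hq0 h]; rewrite lee_fin (mulrC (ln t2 + 1)%R).
      apply: tang => //; rewrite lt_neqAle eq_sym hq0 /=; exact: q0.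
  rewrite IZ adde0; apply: le_trans (leeD IA IB).
  rewrite -EFinD lee_fin.
  have -> : pb = (1 - a)%R by lra.
  have -> : qb = (1 - b)%R by lra.
  lra.
Qed.

End core2.

Section construct.
Context {R : realType} {d : measure_display} {T : measurableType d}
  (mu : {measure set T -> \bar R}).

Lemma step (q : T -> R) (Bs : set T) (b : R) (g : T -> R) (k1 k2 : R) :
  is_density mu q -> measurable Bs -> dprob mu q Bs = b%:E ->
  measurable_fun setT g ->
  (forall x, Bs x -> g x = k1 * q x)%R -> (forall x, ~ Bs x -> g x = k2 * q x)%R ->
  \int[mu]_x (g x)%:E = (k1 * b + k2 * (1 - b))%:E.
Proof.
move=> hq mBs qB mg g1 g2.
have mC : measurable (~` Bs) by exact: measurableC.
have eT : [set: T] = Bs `|` ~` Bs by rewrite setUv.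
have dB : [disjoint Bs & ~` Bs] by apply/disj_set2P; rewrite setICr.
have Q1 : dprob mu q setT = 1 by case: hq => _ [].
rewrite eT dprobU // qB in Q1.
rewrite (@dprobE _ _ _ mu _ _ hq mC) -EFinD in Q1; case: Q1 => Q1.
rewrite eT integral_setU //; last first.
  by apply: (measurable_funS measurableT) => //; exact/measurable_EFinP.
have I1 : \int[mu]_(x in Bs) (g x)%:E = (k1 * fine (dprob mu q Bs) - 0 * fine (dprob mu q Bs))%:E.
  rewrite -int_lin //; apply: eq_integral => x /set_mem /g1 ->.
  by rewrite mul0r subr0.
have I2 : \int[mu]_(x in ~` Bs) (g x)%:E = (k2 * fine (dprob mu q (~` Bs)) - 0 * fine (dprob mu q (~` Bs)))%:E.
  rewrite -int_lin //; apply: eq_integral => x /set_mem /g2 ->.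
  by rewrite mul0r subr0.
rewrite I1 I2 qB /= -EFinD; congr EFin.
have -> : fine (dprob mu q (~` Bs)) = (1 - b)%R by lra.
lra.
Qed.

End construct.

Section construct2.
Context {R : realType} {d : measure_display} {T : measurableType d}
  (mu : {measure set T -> \bar R}).

Lemma construct (q : T -> R) (Bs : set T) (b a : R) :
  is_density mu q -> measurable Bs -> dprob mu q Bs = b%:E ->
  (0 < b)%R -> (b < 1)%R -> (b <= a)%R -> (a <= 1)%R ->
  exists p, [/\ is_density mu p, TV mu p q = (2 * (a - b))%:E &
     KL mu p q = (a * ln (a / b) + (1 - a) * ln ((1 - a) / (1 - b)))%:E].
Proof.
move=> hq mBs qB b0 b1 ba a1.
have [mq [q0 q1]] := hq.
pose r1 := (a / b)%R; pose r2 := ((1 - a) / (1 - b))%R.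
have b1' : (0 < 1 - b)%R by rewrite subr_gt0.
have r1ge1 : (1 <= r1)%R by rewrite /r1 ler_pdivlMr // mul1r.
have r2ge0 : (0 <= r2)%R by rewrite /r2 divr_ge0 // ?subr_ge0 // ltW.
have r2le1 : (r2 <= 1)%R by rewrite /r2 ler_pdivrMr // mul1r lerD2l lerN2.
have r1b : (r1 * b = a)%R by rewrite /r1 divfK // gt_eqF.
have r2b : (r2 * (1 - b) = 1 - a)%R by rewrite /r2 divfK // gt_eqF.
pose r x := (r2 + (r1 - r2) * \1_Bs x)%R.
have rin x : Bs x -> r x = r1.
  by move=> hx; rewrite /r indicE mem_set // mulr1 addrC subrK.
have rout x : ~ Bs x -> r x = r2.
  by move=> hx; rewrite /r indicE memNset // mulr0 addr0.
have mr : measurable_fun setT r.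
  apply: measurable_funD; first exact: measurable_cst.
  by apply: measurable_funM; [exact: measurable_cst|exact: measurable_indic].
have r0 x : (0 <= r x)%R.
  have [hx|hx] := pselect (Bs x); [rewrite rin // | rewrite rout //].
  exact: le_trans r1ge1.
pose p x := (q x * r x)%R.
have mp : measurable_fun setT p by exact: measurable_funM.
have p0 x : (0 <= p x)%R by rewrite mulr_ge0.
have hp : is_density mu p.
  split => //; split => //.
  rewrite (@step _ _ _ mu q Bs b p r1 r2) //.
  - by rewrite r1b r2b; congr EFin; lra.
  - by move=> x hx; rewrite /p rin // mulrC.
  - by move=> x hx; rewrite /p rout // mulrC.
exists p; split => //.
- rewrite /TV (@step _ _ _ mu q Bs b _ (r1 - 1) (1 - r2)) //.
  + congr EFin; rewrite mulrBl mul1r r1b mulrBl mul1r r2b; lra.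
  + apply: measurableT_comp => //; exact: measurable_funB.
  + move=> x hx; rewrite /p rin // -{2}(mulr1 (q x)) -mulrBr mulrC ger0_norm //.
    by rewrite mulr_ge0 // subr_ge0.
  + move=> x hx; rewrite /p rout // -{2}(mulr1 (q x)) -mulrBr ler0_norm; last first.
      by rewrite mulr_ge0_le0 // subr_le0.
    by rewrite -mulrN opprB mulrC.
- have ac : abs_cont mu p q.
    move=> A mA qA; apply/eqP; rewrite eq_le; apply/andP; split; last first.
      exact: dprob_ge0.
    have := @int_lin _ _ _ mu q q A (r1 + r2) 0 hq hq mA.
    rewrite qA /= mulr0 mul0r subr0 => h; rewrite (_ : 0 = (0%R)%:E) // -h.
    apply: ge0_le_integral => //.
    + by move=> x _; rewrite lee_fin.
    + by apply: (measurable_funS measurableT) => //; exact/measurable_EFinP.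
    + apply: (measurable_funS measurableT) => //; apply/measurable_EFinP.
      apply: measurable_funB; last exact: measurable_funM (measurable_cst _) mq.
      exact: measurable_funM (measurable_cst _) mq.
    + move=> x _; rewrite lee_fin mul0r subr0 /p mulrC ler_wpM2r //.
      have [hx|hx] := pselect (Bs x); [rewrite rin // | rewrite rout //].
        by rewrite lerDl.
      by rewrite lerDr; exact: le_trans r1ge1.
  rewrite /KL asboolT //.
  rewrite (@step _ _ _ mu q Bs b _ (r1 * ln r1) (r2 * ln r2)) //.
  + congr EFin; rewrite -/r1 -/r2.
    have e1 : (a * ln r1 = r1 * ln r1 * b)%R by rewrite -{1}r1b; ring.
    have e2 : ((1 - a) * ln r2 = r2 * ln r2 * (1 - b))%R by rewrite -{1}r2b; ring.
    by rewrite e1 e2.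
  + exact: mKL.
  + move=> x hx; rewrite /p rin //.
    have [->|qn0] := eqVneq (q x) 0%R; first by rewrite !(mul0r, mulr0).
    by rewrite [(q x * _ / q x)%R]mulrAC divff // mul1r; ring.
  + move=> x hx; rewrite /p rout //.
    have [->|qn0] := eqVneq (q x) 0%R; first by rewrite !(mul0r, mulr0).
    by rewrite [(q x * _ / q x)%R]mulrAC divff // mul1r; ring.
Qed.

End construct2.

Section kbound.
Context {R : realType}.

Lemma Kbound (a b a' : R) (X : \bar R) :
  (0 < b)%R -> (b < 1)%R -> (b <= a')%R -> (a' <= a)%R -> (a <= 1)%R ->
  (forall t1 t2 : R, (0 < t1)%R -> (0 < t2)%R ->
      ((a * (ln t1 + 1) - t1 * b) + ((1 - a) * (ln t2 + 1) - t2 * (1 - b)))%:E <= X) ->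
  (a' * ln (a' / b) + (1 - a') * ln ((1 - a') / (1 - b)))%:E <= X.
Proof.
move=> b0 b1 ba' a'a a1 H.
have b1' : (0 < 1 - b)%R by rewrite subr_gt0.
have a'0 : (0 < a')%R by exact: lt_le_trans ba'.
have [a'1|a'1] := eqVneq a' 1%R.
  have a1' : a = 1%R by apply/eqP; rewrite eq_le a1 -a'1 a'a.
  subst a' a.
  apply/lee_addgt0Pr => e e0.
  have t2p : (0 < e / (1 - b))%R by rewrite divr_gt0.
  have t1p : (0 < 1 / b)%R by rewrite divr_gt0.
  have h := H _ _ t1p t2p.
  rewrite -leeBlDr // -EFinB; apply: le_trans; last exact: h; rewrite lee_fin.
  rewrite subrr !mul0r addr0 mul1r (divfK (lt0r_neq0 b1')) div1r mulVf ?gt_eqF //.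
  lra.
have a'1' : (a' < 1)%R by rewrite lt_neqAle a'1 (le_trans a'a a1).
pose t1 := (a' / b)%R; pose t2 := ((1 - a') / (1 - b))%R.
have t1p : (0 < t1)%R by rewrite divr_gt0.
have t2p : (0 < t2)%R by rewrite divr_gt0 // subr_gt0.
have h := H t1 t2 t1p t2p.
apply: (le_trans _ h); rewrite lee_fin -/t1 -/t2.
have e1 : (t1 * b = a')%R by rewrite /t1 divfK // gt_eqF.
have e2 : (t2 * (1 - b) = 1 - a')%R by rewrite /t2 divfK // gt_eqF.
have l1 : (0 <= ln t1)%R by apply: ln_ge0; rewrite /t1 ler_pdivlMr // mul1r.
have l2 : (ln t2 <= 0)%R.
  by apply: ln_le0; rewrite /t2 ler_pdivrMr // mul1r lerD2l lerN2.
have h1 : (0 <= (a - a') * ln t1)%R by rewrite mulr_ge0 // subr_ge0.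
have h2 : (0 <= (a' - a) * ln t2)%R by rewrite mulr_le0 // subr_le0.
rewrite e1 e2.
nra.
Qed.

End kbound.

Theorem theorem2 (R : realType) (d : measure_display) (T : measurableType d)
  (mu : {measure set T -> \bar R}) (q : T -> R) :
  sigma_finite setT mu -> is_density mu q -> full_range mu q ->
  forall v : R, (0 < v < 2)%R -> Dstar mu q v = vajdaL v.
Proof.
move=> sf hq fr v /andP[v0 v2].
have getB : forall b : R, (0 <= b <= 1)%R ->
    exists Bs, measurable Bs /\ dprob mu q Bs = b%:E.
  move=> b hb.
  have : [set r%:E | r in [set r : R | (0 <= r <= 1)%R]] b%:E by exists b.
  by rewrite -fr => -[Bs mBs e]; exists Bs.
apply/eqP; rewrite eq_le; apply/andP; split.
- apply: le_ereal_inf_tmp => x [d' [T' [mu' [p0 [q0 [sf' hp0 hq0 tv kl]]]]]].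
  rewrite -kl /KL; have [ac|ac] := pselect (abs_cont mu' p0 q0); last first.
    by rewrite asboolF // leey.
  rewrite asboolT //.
  have [a [b [/andP[b0 ba] a1 b0a tve hb]]] := @core _ _ _ mu' _ _ hp0 hq0 ac.
  have vab : v = (2 * (a - b))%R by move: tv; rewrite tve => -[].
  have bp : (0 < b)%R.
    rewrite lt_neqAle b0 andbT; apply/eqP => b0'.
    by move: v0; rewrite vab -b0' (b0a (esym b0')) subrr mulr0 ltxx.
  have b1 : (b < 1)%R by lra.
  have [Bs [mBs qB]] := getB b ltac:(apply/andP; split; lra).
  have [p [hp tvp klp]] := @construct _ _ _ mu _ _ _ _ hq mBs qB bp b1 ba a1.
  apply: (@le_trans _ _ (KL mu p q)).
    apply: ereal_inf_lbound; exists p => //; split => //.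
    by rewrite tvp -vab.
  rewrite klp.
  exact: (@Kbound _ a b a _ bp b1 ba (le_refl a) a1 hb).
- apply: le_ereal_inf_tmp => x [p [hp tvp] <-].
  rewrite /KL; have [ac|ac] := pselect (abs_cont mu p q); last first.
    by rewrite asboolF // leey.
  rewrite asboolT //.
  have [a [b [/andP[b0 ba] a1 b0a tve hb]]] := @core _ _ _ mu _ _ hp hq ac.
  move: tvp; rewrite tve lee_fin => vab.
  have bp : (0 < b)%R.
    rewrite lt_neqAle b0 andbT; apply/eqP => b0'.
    by move: vab; rewrite -b0' (b0a (esym b0')) subrr mulr0 => /(lt_le_trans v0); rewrite ltxx.
  have b1 : (b < 1)%R by lra.
  have [Bs [mBs qB]] := getB b ltac:(apply/andP; split; lra).
  pose a' := (b + v / 2)%R.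
  have ba' : (b <= a')%R by rewrite /a'; lra.
  have a'a : (a' <= a)%R by rewrite /a'; lra.
  have a'1 : (a' <= 1)%R by lra.
  have [p' [hp' tvp' klp']] := @construct _ _ _ mu _ _ _ _ hq mBs qB bp b1 ba' a'1.
  apply: (@le_trans _ _ (a' * ln (a' / b) + (1 - a') * ln ((1 - a') / (1 - b)))%:E).
    apply: ereal_inf_lbound; exists d, T, mu, p', q; split => //.
    by rewrite tvp' /a'; congr EFin; lra.
  exact: (@Kbound _ a b a' _ bp b1 ba' a'a a1 hb).
Qed.
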